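(* Let $A\in\mathbb{C}^{m\times n}$. Then the following are equivalent: (1) $A^{\mathfrak{m}}$ exists; (2) $\mathrm{rank}(AA^{\sim})=\mathrm{rank}(A^{\sim})$ and there exist $X\in\mathbb{C}^{m\times m}$ and a projector (idempotent matrix) $Y\in\mathbb{C}^{m\times m}$ such that $XAA^{\sim}-YX=I_m$, $AA^{\sim}X=XAA^{\sim}$ and $AA^{\sim}Y=0$. In this case, for any such $X$, $A^{\mathfrak{m}}=A^{\sim}X$.
   Context: For a positive integer $k$, the Minkowski metric matrix of order $k$ is $G_k=\mathrm{diag}(1,-I_{k-1})$ (with $G_1=(1)$). For $A\in\mathbb{C}^{m\times n}$, the Minkowski adjoint is $A^{\sim}=G_nA^*G_m$, where $A^*$ is the conjugate transpose. The Minkowski inverse of $A$, denoted $A^{\mathfrak{m}}$, is a matrix $Z\in\mathbb{C}^{n\times m}$ with $AZA=A$, $ZAZ=Z$, $(AZ)^{\sim}=AZ$, $(ZA)^{\sim}=ZA$ (unique if it exists). *)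

(* Defs.v *)
(* Complex matrices over an arbitrary numClosedFieldType C
   (algebraically closed field with conjugation, e.g. algC or complex R). *)
From HB Require Import structures.
From mathcomp Require Import all_boot all_order all_algebra.
Set Implicit Arguments. Unset Strict Implicit. Unset Printing Implicit Defensive.
Import Order.TTheory GRing.Theory Num.Theory.
Local Open Scope ring_scope.

Definition mink_G (C : numClosedFieldType) (k : nat) : 'M[C]_k :=
  \matrix_(i < k, j < k)
    (if i == j then (if (i : nat) == 0%N then 1 else -1) else 0).

Definition conjT (C : numClosedFieldType) (m n : nat) (A : 'M[C]_(m, n))
  : 'M[C]_(n, m) := (map_mx (fun z : C => z^*) A)^T.

Definition mink_adj (C : numClosedFieldType) (m n : nat) (A : 'M[C]_(m, n))
  : 'M[C]_(n, m) := mink_G C n *m conjT A *m mink_G C m.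

Definition is_mink_inv (C : numClosedFieldType) (m n : nat)
  (A : 'M[C]_(m, n)) (Z : 'M[C]_(n, m)) : Prop :=
  [/\ A *m Z *m A = A, Z *m A *m Z = Z,
      mink_adj (A *m Z) = A *m Z & mink_adj (Z *m A) = Z *m A].

Definition cond2_XY (C : numClosedFieldType) (m n : nat)
  (A : 'M[C]_(m, n)) (X Y : 'M[C]_m) : Prop :=
  [/\ Y *m Y = Y,
      X *m (A *m mink_adj A) - Y *m X = 1%:M,
      (A *m mink_adj A) *m X = X *m (A *m mink_adj A)
    & (A *m mink_adj A) *m Y = 0].

(* Main.v *)
Require Import Defs.
From HB Require Import structures.
From mathcomp Require Import all_boot all_order all_algebra.
Import Order.TTheory GRing.Theory Num.Theory.
Local Open Scope ring_scope.
Section S.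
Variable C : numClosedFieldType.
Lemma conjT_mul m n p (A : 'M[C]_(m,n)) (B : 'M[C]_(n,p)) : conjT (A *m B) = conjT B *m conjT A.
Proof. by rewrite /conjT map_mxM trmx_mul. Qed.
Lemma conjTK m n (A : 'M[C]_(m,n)) : conjT (conjT A) = A.
Proof. by apply/matrixP=> i j; rewrite !mxE conjCK. Qed.
Lemma conjT_G k : conjT (mink_G C k) = mink_G C k.
Proof.
apply/matrixP=> i j; rewrite !mxE eq_sym; case: eqP => [->|_]; last by rewrite rmorph0.
by case: ifP => _; rewrite ?rmorphN rmorph1.
Qed.
Lemma GG k : mink_G C k *m mink_G C k = 1%:M.
Proof.
apply/matrixP=> i j; rewrite !mxE (bigD1 i) //= big1 => [|l /negbTE nl]; last first.
  by rewrite !mxE eq_sym nl mul0r.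
rewrite !mxE eqxx addr0; case: (i == j); last by rewrite mulr0.
by case: ifP => _; rewrite ?mulr1 // mulrNN mulr1.
Qed.
Lemma adjM m n p (A : 'M[C]_(m,n)) (B : 'M[C]_(n,p)) : mink_adj (A *m B) = mink_adj B *m mink_adj A.
Proof.
rewrite /mink_adj conjT_mul !mulmxA; congr (_ *m _).
by rewrite -(mulmxA _ (mink_G C n) (mink_G C n)) GG mulmx1.
Qed.
Lemma adjK m n (A : 'M[C]_(m,n)) : mink_adj (mink_adj A) = A.
Proof.
by rewrite /mink_adj !conjT_mul conjTK !conjT_G !mulmxA GG mul1mx -mulmxA GG mulmx1.
Qed.

Opaque mink_adj.
Lemma mink_uniq m n (A : 'M[C]_(m,n)) Z1 Z2 :
  is_mink_inv A Z1 -> is_mink_inv A Z2 -> Z1 = Z2.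
Proof.
case=> h1a h1b h1c h1d [h2a h2b h2c h2d].
have e1 : mink_adj A = mink_adj A *m (A *m Z2) by rewrite -{1}h2a adjM h2c.
have e2 : mink_adj A = Z1 *m A *m mink_adj A by rewrite -{1}h1a -mulmxA adjM h1d.
transitivity (Z1 *m A *m Z2).
  rewrite -{1}h1b -(mulmxA Z1) -h1c adjM e1 (mulmxA (mink_adj Z1)) -adjM h1c.
  by rewrite !mulmxA h1b.
symmetry; rewrite -{1}h2b -h2d adjM e2 -(mulmxA (Z1 *m A)) -adjM h2d.
by rewrite -(mulmxA (Z1 *m A)) h2b.
Qed.
Lemma adjMM m n (A : 'M[C]_(m,n)) : mink_adj (A *m mink_adj A) = A *m mink_adj A.
Proof. by rewrite adjM adjK. Qed.

Lemma dir21 m n (A : 'M[C]_(m,n)) X Y :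
  \rank (A *m mink_adj A) = \rank (mink_adj A) -> cond2_XY A X Y ->
  is_mink_inv A (mink_adj A *m X).
Proof.
move=> hrank [hY hXY hXc hMY].
have aMM := adjMM _ _ A.
set M := A *m mink_adj A in hrank hXY hXc hMY aMM *.
have sub : (M <= mink_adj A)%MS by rewrite submxMl.
have hM : A *m mink_adj A = M by [].
clearbody M.
have hMXM : M *m X *m M = M.
  have := congr1 (mulmx M) hXY.
  by rewrite mulmxBr mulmx1 !mulmxA hMY mul0mx subr0.
have : (mink_adj A <= M)%MS by rewrite -(mxrank_leqif_sup sub).2 hrank eqxx.
case/submxP=> W hW.
have hA : A = M *m mink_adj W by rewrite -{1}(adjK _ _ A) hW adjM aMM.
have h2 : mink_adj A *m X *m M = mink_adj A.
  by rewrite hW -(mulmxA W) -(mulmxA W) hMXM.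
have hMXA : M *m X *m A = A.
  have : M *m X *m (M *m mink_adj W) = M *m mink_adj W by rewrite mulmxA hMXM.
  by rewrite -hA.
have e4 : mink_adj (M *m M *m X) = M.
  by rewrite -mulmxA hXc mulmxA hMXM aMM.
rewrite !adjM aMM in e4.
have g : mink_adj A *m mink_adj X *m M = mink_adj A.
  by rewrite -{2}hMXA !adjM aMM mulmxA.
have aMX : mink_adj (M *m X) = mink_adj X *m M by rewrite adjM aMM.
have aAXA : mink_adj (mink_adj A *m X *m A) = mink_adj A *m mink_adj X *m A.
  by rewrite [mink_adj (mink_adj A *m X *m A)]adjM [mink_adj (mink_adj A *m X)]adjM adjK mulmxA.
move: aMX aAXA g e4 hA.
move: (mink_adj X) (mink_adj W) => aX aW aMX aAXA g e4 hA.
split.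
- by rewrite mulmxA hM hMXA.
- by rewrite mulmxA -(mulmxA (mink_adj A *m X) A) hM h2.
- rewrite mulmxA hM aMX.
  have e3 : aX *m M *m M *m X = aX *m M.
    by rewrite -!mulmxA hXc (mulmxA M) hMXM.
  by rewrite -e3 -(mulmxA aX M M) e4.
- rewrite aAXA.
  have f1 : mink_adj A *m X *m A = mink_adj A *m aW.
    have : mink_adj A *m X *m (M *m aW) = mink_adj A *m aW.
      by rewrite mulmxA h2.
    by rewrite -hA.
  have f2 : mink_adj A *m aX *m A = mink_adj A *m aW.
    have : mink_adj A *m aX *m (M *m aW) = mink_adj A *m aW.
      by rewrite mulmxA g.
    by rewrite -hA.
  by rewrite f1 f2.
Qed.
Lemma dir12 m n (A : 'M[C]_(m,n)) Z : is_mink_inv A Z ->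
  \rank (A *m mink_adj A) = \rank (mink_adj A) /\
  exists X Y : 'M[C]_m, cond2_XY A X Y.
Proof.
case=> ha hb hc hd.
have eA : mink_adj A = Z *m (A *m mink_adj A).
  by rewrite -{1}ha -mulmxA adjM hd -mulmxA.
have eA2 : A = A *m mink_adj A *m mink_adj Z.
  by rewrite -{1}ha -mulmxA -hd adjM mulmxA.
have eA3 : mink_adj A = mink_adj A *m (A *m Z) by rewrite -{1}ha adjM hc.
have aAZ : mink_adj Z *m mink_adj A = A *m Z by rewrite -adjM hc.
set M := A *m mink_adj A in eA eA2 *.
have hM : A *m mink_adj A = M by [].
clearbody M.
have hM0 := hM.
split.
  apply/eqP; rewrite eqn_leq -hM mxrankM_maxr /= hM.
  by rewrite {1}eA mxrankM_maxr.
move: eA eA2 eA3 aAZ hM.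
move: (mink_adj A) (mink_adj Z) => aA aZ eA eA2 eA3 aAZ hM.
pose K := aZ *m Z.
have MKM : M *m K *m M = M.
  by rewrite /K mulmxA -eA2 -mulmxA -eA.
have MMK : M *m M *m K = M.
  by rewrite /K mulmxA -(mulmxA M M) -eA2 -hM -!mulmxA -eA3.
have KMM : K *m M *m M = M.
  by rewrite /K -(mulmxA aZ) -eA aAZ -mulmxA -eA hM.
have KM : K *m M = M *m K by rewrite -{1}MMK (mulmxA K (M *m M) K) (mulmxA K M M) KMM.
clearbody K.
have P1 : K *m M *m K *m M = K *m M by rewrite -!mulmxA (mulmxA M K M) MKM.
have P2 : M *m K *m K *m M *m K = K *m M *m K.
  by rewrite -(mulmxA (M *m K) K M) KM mulmxA MKM.
exists (K *m M *m K - (1%:M - M *m K)), (1%:M - M *m K).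
rewrite /cond2_XY hM0.
split.
- by rewrite mulmxBl mul1mx mulmxBr mulmx1 mulmxA MKM subrr subr0.
- rewrite !mulmxBr !mulmxBl !mulmx1 !mul1mx !mulmxA P1 P2 !MKM !subrr subr0 sub0r opprB.
  by rewrite sub0r opprK KM addrC subrK.
- by rewrite !mulmxBr !mulmxBl !mulmx1 !mul1mx !mulmxA P1 !MKM MMK KM.
- by rewrite mulmxBr mulmx1 mulmxA MMK subrr.
Qed.
End S.

Theorem theorem6p4 (C : numClosedFieldType) (m n : nat)
  (Hm : (0 < m)%N) (Hn : (0 < n)%N) (A : 'M[C]_(m, n)) :
  ((exists Z : 'M[C]_(n, m), is_mink_inv A Z) <->
   (\rank (A *m mink_adj A) = \rank (mink_adj A) /\
    exists X Y : 'M[C]_m, cond2_XY A X Y))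
  /\
  (forall X Y : 'M[C]_m,
     \rank (A *m mink_adj A) = \rank (mink_adj A) -> cond2_XY A X Y ->
     is_mink_inv A (mink_adj A *m X) /\
     (forall Z : 'M[C]_(n, m), is_mink_inv A Z -> Z = mink_adj A *m X)).
Proof.
split.
  split; first by case=> Z hZ; apply: dir12 hZ.
  by case=> hr [X [Y h]]; exists (mink_adj A *m X); apply: dir21 h.
move=> X Y hr h; have hZ := dir21 _ _ _ _ _ _ hr h; split => // Z hZ'.
exact: (mink_uniq _ _ _ _ _ _ hZ' hZ).
Qed.
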